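(* For every dyadic strip $D\in\mathcal D$ and every dyadic tree $T\in\mathcal T$, $$\mu(D)=\sigma(D)=|\pi(D)|,\qquad \nu(T)=\tau(T)=|\pi(T)|,$$ where $\pi$ is the projection onto the first coordinate and $|\cdot|$ is Lebesgue measure. Moreover, for every $T\in\mathcal T$, $\nu(T)=|\pi(T)|=|\pi(D(T))|=\mu(D(T))$, where $D(T)=\pi(T)\times(0,|\pi(T)|]\times\mathbb R\in\mathcal D$.
   Context: Dyadic intervals: $I(m,l)=(2^lm,2^l(m+1)]$. Tiles: $H(m,l,n)=I(m,l)\times(2^{l-1},2^l]\times I(n,-l)$. Strips $D(m,l)=I(m,l)\times(0,2^l]\times\mathbb R$ form $\mathcal D$, with $\sigma(D(m,l))=2^l$. Trees $T(m,l,n)=\bigcup_{l'\le l}\bigcup_{m':\,I(m',l')\subseteq I(m,l)}H(m',l',N(n,l'))$, with $N(n,l')$ the integer such that $I(n,-l)\subseteq I(N(n,l'),-l')$, form $\mathcal T$, with $\tau(T(m,l,n))=2^l$. On $X=\mathbb R\times(0,\infty)\times\mathbb R$, $\mu(A)=\inf\{\sum_{S\in\mathcal S'}\sigma(S):\mathcal S'\subseteq\mathcal D,\ A\subseteq\bigcup\mathcal S'\}$ and $\nu(A)=\inf\{\sum_{S\in\mathcal S'}\tau(S):\mathcal S'\subseteq\mathcal T,\ A\subseteq\bigcup\mathcal S'\}$. *)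

(* Defs.v *)
From HB Require Import structures.
From mathcomp Require Import all_boot all_order all_algebra.
From mathcomp Require Import all_classical all_reals all_analysis.
Set Implicit Arguments. Unset Strict Implicit. Unset Printing Implicit Defensive.
Import Order.TTheory GRing.Theory Num.Theory.
Local Open Scope classical_set_scope.
Local Open Scope ring_scope.

Section Dyadic.
Variable R : realType.

(* Points of X = R x (0,oo) x R are represented as triples ((x, xi), eta). *)
Definition pt := (R * R * R)%type.

Definition dI (m l : int) : set R :=
  [set x | (2 ^ l) * m%:~R < x /\ x <= (2 ^ l) * (m + 1)%:~R].

Definition tile (m l n : int) : set pt :=
  [set p | dI m l p.1.1 /\ (2 ^ (l - 1) < p.1.2 /\ p.1.2 <= 2 ^ l)
           /\ dI n (- l) p.2].

Definition strip (m l : int) : set pt :=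
  [set p | dI m l p.1.1 /\ (0 < p.1.2 /\ p.1.2 <= 2 ^ l)].

Definition sigma (i : int * int) : \bar R := ((2 : R) ^ i.2)%:E.

(* tree T(m,l,n): union over l' <= l, I(m',l') within I(m,l), of
   H(m', l', N(n,l')), where N(n,l') is the (unique) integer n' with
   I(n,-l) contained in I(n',-l'). *)
Definition tree (m l n : int) : set pt :=
  [set p | exists m' l' n', (l' <= l)%R /\ dI m' l' `<=` dI m l /\
     dI n (- l) `<=` dI n' (- l') /\ tile m' l' n' p].

Definition tau (i : int * int * int) : \bar R := ((2 : R) ^ i.1.2)%:E.

Definition mu (A : set pt) : \bar R :=
  ereal_inf [set (\esum_(i in S) sigma i)%E | S in
     [set S : set (int * int) | A `<=` \bigcup_(i in S) strip i.1 i.2]].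

Definition nu (A : set pt) : \bar R :=
  ereal_inf [set (\esum_(i in S) tau i)%E | S in
     [set S : set (int * int * int) | A `<=` \bigcup_(i in S) tree i.1.1 i.1.2 i.2]].

Definition proj1 (A : set pt) : set R := [set p.1.1 | p in A].

Definition leb (B : set R) : \bar R := lebesgue_measure B.

Definition stripOf (A : set pt) : set pt :=
  [set p : pt | proj1 A p.1.1 /\ (0 < p.1.2 /\ ((p.1.2)%:E <= leb (proj1 A))%E)].

End Dyadic.

(* Main.v *)
Require Import Defs.
From HB Require Import structures.
From mathcomp Require Import all_boot all_order all_algebra.
From mathcomp Require Import all_classical all_reals all_analysis.
Import Order.TTheory GRing.Theory Num.Theory.
Local Open Scope classical_set_scope.
Local Open Scope ring_scope.

Section S.
Variable R : realType.

Lemma p2gt0 (l : int) : 0 < (2:R) ^ l.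
Proof. by rewrite exprz_gt0. Qed.

Lemma p2le (a b : int) : (2:R) ^ a <= 2 ^ b -> (a <= b)%R.
Proof. by rewrite ler_eXz2l // ltr1n. Qed.

Lemma p2lt (a b : int) : (a < b)%R -> (2:R) ^ a < 2 ^ b.
Proof. by rewrite ltr_eXz2l // ltr1n. Qed.

Lemma dI_itv (m l : int) : dI m l = [set` `]((2:R) ^ l * m%:~R), (2 ^ l * m%:~R + 2 ^ l)]%R].
Proof.
apply/seteqP; split => x /=; rewrite /dI in_itv /= intrD mulrDr mulr1.
  by move=> [-> ->].
by move=> /andP[-> ->].
Qed.

Lemma leb_dI (m l : int) : leb (dI m l) = ((2:R) ^ l)%:E.
Proof.
rewrite /leb dI_itv lebesgue_measure_itv /= lte_fin ltrDl p2gt0.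
by rewrite -EFinD addrAC subrr add0r.
Qed.

Lemma proj1_strip m l : proj1 (@strip R m l) = dI m l.
Proof.
apply/seteqP; split => x /=; first by move=> [p [? _] <-].
move=> hx; exists ((x, 2 ^ l), 0) => //=; split => //; split => //; exact: p2gt0.
Qed.

Lemma tile_top m l n : @tile R m l n ((2 ^ l * (m + 1)%:~R, 2 ^ l), 2 ^ (- l) * (n + 1)%:~R).
Proof.
rewrite /tile /dI /=; split; [split|split; [split|split]] => //.
- by rewrite ltr_pM2l ?p2gt0 // ltr_int ltrDl.
- by apply: p2lt; rewrite gtrBl.
- by rewrite ltr_pM2l ?p2gt0 // ltr_int ltrDl.
Qed.

Lemma tree_top m l n : @tree R m l n ((2 ^ l * (m + 1)%:~R, 2 ^ l), 2 ^ (- l) * (n + 1)%:~R).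
Proof. exists m, l, n; split => //; split => //; split => //; exact: tile_top. Qed.

Lemma proj1_tree m l n : proj1 (@tree R m l n) = dI m l.
Proof.
apply/seteqP; split => x /=.
  by move=> [p [m' [l' [n' [_ [sub [_ [h _]]]]]]] <-]; exact: sub.
move=> hx; exists ((x, 2 ^ l), 2 ^ (- l) * (n + 1)%:~R) => //.
exists m, l, n; split => //; split => //; split => //.
have := tile_top m l n; rewrite /tile /= => -[_ [h1 h2]]; by split.
Qed.

Lemma esum_single_ge (T : choiceType) (S : set T) (f : T -> \bar R) i :
  S i -> (0 <= f i)%E -> (f i <= \esum_(j in S) f j)%E.
Proof.
move=> Si f0; apply: esum_ge; exists [set i].
  by split; [exact: finite_set1| move=> j ->].
by rewrite fsbig_set1.
Qed.

Lemma mu_strip m l : mu (@strip R m l) = ((2:R) ^ l)%:E.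
Proof.
apply/eqP; rewrite eq_le; apply/andP; split.
  apply: ereal_inf_lbound; exists [set (m, l)].
    by move=> p hp; exists (m, l).
  by rewrite esum_set1 // lee_fin ltW // p2gt0.
apply: le_ereal_inf_tmp => _ [S hS <-].
have hp : @strip R m l ((2 ^ l * (m + 1)%:~R, 2 ^ l), 0).
  have := tile_top m l 0; rewrite /tile => -[h1 [[_ h2] _]].
  by split => //; split => //; exact: p2gt0.
have [i Si [_ [_ hi]]] := hS _ hp.
have h0 : (0 <= @sigma R i)%E by rewrite /sigma lee_fin ltW // p2gt0.
apply: le_trans (@esum_single_ge _ S (@sigma R) i Si h0).
by rewrite /sigma lee_fin; apply: hi.
Qed.


Lemma p2leW (a b : int) : (a <= b)%R -> (2:R) ^ a <= 2 ^ b.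
Proof. by rewrite ler_eXz2l // ltr1n. Qed.

Lemma nu_tree m l n : nu (@tree R m l n) = ((2:R) ^ l)%:E.
Proof.
apply/eqP; rewrite eq_le; apply/andP; split.
  apply: ereal_inf_lbound; exists [set (m, l, n)].
    by move=> p hp; exists (m, l, n).
  by rewrite esum_set1 // lee_fin ltW // p2gt0.
apply: le_ereal_inf_tmp => _ [S hS <-].
have [i Si [m' [l' [n' [hl' [_ [_ [_ [[_ h2] _]]]]]]]]] := hS _ (tree_top m l n).
have h0 : (0 <= @tau R i)%E by rewrite /tau lee_fin ltW // p2gt0.
apply: le_trans (@esum_single_ge _ S (@tau R) i Si h0).
rewrite /tau lee_fin; apply: p2leW; apply: le_trans hl'; exact: p2le.
Qed.

Lemma stripOf_tree m l n : stripOf (@tree R m l n) = strip m l.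
Proof.
rewrite /stripOf proj1_tree leb_dI; apply/seteqP; split => p /=.
  by move=> [h1 [h2 h3]]; split => //; split => //; rewrite -lee_fin.
by move=> [h1 [h2 h3]]; split => //; split => //; rewrite lee_fin.
Qed.

End S.

Theorem lemma4p3 (R : realType) :
  (forall m l : int,
      mu (strip m l) = @sigma R (m, l) /\
      @sigma R (m, l) = leb (proj1 (@strip R m l))) /\
  (forall m l n : int,
      nu (tree m l n) = @tau R (m, l, n) /\
      @tau R (m, l, n) = leb (proj1 (@tree R m l n))) /\
  (forall m l n : int,
      (exists m' l' : int, stripOf (@tree R m l n) = strip m' l') /\
      nu (@tree R m l n) = leb (proj1 (@tree R m l n)) /\
      leb (proj1 (@tree R m l n)) = leb (proj1 (stripOf (@tree R m l n))) /\
      leb (proj1 (stripOf (@tree R m l n))) = mu (stripOf (@tree R m l n))).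
Proof.
split; [|split].
- by move=> m l; rewrite mu_strip proj1_strip leb_dI.
- by move=> m l n; rewrite nu_tree proj1_tree leb_dI.
- move=> m l n; rewrite stripOf_tree nu_tree proj1_tree proj1_strip leb_dI mu_strip.
  by split => //; exists m, l.
Qed.
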